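(* Let $d,d'\in\mathcal D$, with notation $(\mathbf P,\mathbf r,J_\mu,J_{\mu,\sigma},\mathbf g)$ for $d$ and $(\mathbf P',\mathbf r',J'_{\mu,\sigma})$ for $d'$, and write $p(i,j),r(i),g(j)$, $p'(i,j),r'(i)$ for the entries. If $$\sum_{j\in\mathcal S}p'(i,j)g(j)+r'(i)-\beta(r'(i)-J_\mu)^2\ \ge\ \sum_{j\in\mathcal S}p(i,j)g(j)+r(i)-\beta(r(i)-J_\mu)^2\qquad\text{for all } i\in\mathcal S,$$ then $J'_{\mu,\sigma}\ge J_{\mu,\sigma}$. If moreover the inequality is strict for at least one $i\in\mathcal S$, then $J'_{\mu,\sigma}>J_{\mu,\sigma}$.
   Context: Let $\mathcal S=\{1,\dots,S\}$ be a finite state space and $\mathcal A$ a finite action set. For $i,j\in\mathcal S$, $a\in\mathcal A$, let $p^a(i,j)\ge 0$ with $\sum_{j}p^a(i,j)=1$ be transition probabilities and $r(i,a)\in\mathbb R$ rewards. A deterministic stationary policy is a map $d:\mathcal S\to\mathcal A$; $\mathcal D$ denotes the set of such policies. Under $d$, $\mathbf P^d$ is the $S\times S$ matrix with entries $p^{d(i)}(i,j)$ and $\mathbf r^d$ is the column vector with entries $r(i,d(i))$. Standing assumption: for every $d\in\mathcal D$ the chain with transition matrix $\mathbf P^d$ is irreducible, so it has a unique stationary distribution (row vector) $\boldsymbol\pi^d$, $\boldsymbol\pi^d\mathbf P^d=\boldsymbol\pi^d$, $\boldsymbol\pi^d\mathbf 1=1$, with all entries strictly positive. Define $J^d_\mu=\boldsymbol\pi^d\mathbf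 r^d$, $J^d_\sigma=\sum_i\pi^d(i)(r(i,d(i))-J^d_\mu)^2$, and for fixed $\beta>0$, $J^d_{\mu,\sigma}=J^d_\mu-\beta J^d_\sigma=\boldsymbol\pi^d\mathbf f^d$ with $f^d(i)=r(i,d(i))-\beta(r(i,d(i))-J^d_\mu)^2$. The performance potential $\mathbf g^d$ is any solution of $\mathbf g^d=\mathbf f^d-J^d_{\mu,\sigma}\mathbf 1+\mathbf P^d\mathbf g^d$ (unique up to an additive constant vector). *)

(* Defs.v *)
From mathcomp Require Import all_boot all_order all_algebra.
Set Implicit Arguments. Unset Strict Implicit. Unset Printing Implicit Defensive.
Import Order.TTheory GRing.Theory Num.Theory.
Local Open Scope ring_scope.

Section MDP.
Variables (R : realFieldType) (n : nat) (A : finType).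
(* transition probabilities p a i j = p^a(i,j), rewards r i a = r(i,a) *)
Variable p : A -> 'I_n -> 'I_n -> R.
Variable r : 'I_n -> A -> R.

Definition Pmat (d : 'I_n -> A) : 'M[R]_n := \matrix_(i, j) p (d i) i j.

Definition Ppow (P : 'M[R]_n) (k : nat) : 'M[R]_n := iter k (fun M => M *m P) 1%:M.

Definition irreducible (P : 'M[R]_n) : Prop :=
  forall i j : 'I_n, exists k : nat, 0 < Ppow P k i j.

Definition stationary_dist (P : 'M[R]_n) (pi : 'rV[R]_n) : Prop :=
  [/\ pi *m P = pi, \sum_i pi 0 i = 1 & forall i, 0 <= pi 0 i].

Definition Jmu (pi : 'rV[R]_n) (d : 'I_n -> A) : R := \sum_i pi 0 i * r i (d i).

Definition fvec (beta : R) (pi : 'rV[R]_n) (d : 'I_n -> A) (i : 'I_n) : R :=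
  r i (d i) - beta * (r i (d i) - Jmu pi d) ^+ 2.

Definition Jmusig (beta : R) (pi : 'rV[R]_n) (d : 'I_n -> A) : R :=
  \sum_i pi 0 i * fvec beta pi d i.

Definition potential (beta : R) (pi : 'rV[R]_n) (d : 'I_n -> A) (g : 'I_n -> R) : Prop :=
  forall i, g i = fvec beta pi d i - Jmusig beta pi d + \sum_j Pmat d i j * g j.
End MDP.

(* Main.v *)
Require Import Defs.
From mathcomp Require Import all_boot all_order all_algebra.
From mathcomp Require Import ring lra.
Import Order.TTheory GRing.Theory Num.Theory.
Local Open Scope ring_scope.

Lemma var_shift (R : realFieldType) n (w x : 'I_n -> R) (c : R) :
  \sum_i w i = 1 ->
  \sum_i w i * (x i - c)^+2 =
  \sum_i w i * (x i - \sum_j w j * x j)^+2 + (\sum_j w j * x j - c)^+2.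
Proof.
move=> hw; set mm := \sum_j w j * x j.
have e : forall i, w i * (x i - c)^+2 = w i * (x i - mm)^+2 +
   ((mm - c)*2 * (w i * x i) + (-((mm - c) * 2 * mm) + (mm - c)^+2) * w i) by move=> i; ring.
rewrite (eq_bigr _ (fun i _ => e i)) !big_split /= -!mulr_sumr hw -/mm; ring.
Qed.

Lemma Ppow_ge0 (R : realFieldType) n (P : 'M[R]_n) :
  (forall i j, 0 <= P i j) -> forall k i j, 0 <= Ppow P k i j.
Proof.
move=> hP; elim=> [|k IH] i j /=.
  by rewrite /Ppow /= mxE ler0n.
rewrite /Ppow /= -/(Ppow P k) mxE; apply: sumr_ge0 => l _; exact: mulr_ge0.
Qed.

Lemma stat_pow (R : realFieldType) n (P : 'M[R]_n) (pi : 'rV[R]_n) :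
  pi *m P = pi -> forall k, pi *m Ppow P k = pi.
Proof.
move=> h; elim=> [|k IH]; first by rewrite /Ppow /= mulmx1.
by rewrite /Ppow /= -/(Ppow P k) mulmxA IH h.
Qed.

Lemma pi_pos (R : realFieldType) n (P : 'M[R]_n) (pi : 'rV[R]_n) :
  (forall i j, 0 <= P i j) -> irreducible P -> stationary_dist P pi ->
  forall i, 0 < pi 0 i.
Proof.
move=> hP hirr [hs h1 h0] i.
have [j hj] : exists j, 0 < pi 0 j.
  case: (pickP (fun j => 0 < pi 0 j)) => [j hj|hn]; first by exists j.
  have : \sum_i pi 0 i = 0.
    apply: big1 => l _; apply/eqP; rewrite eq_le h0 andbT.
    by rewrite leNgt hn.
  by rewrite h1 => /eqP; rewrite oner_eq0.
have [k hk] := hirr j i.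
have := congr1 (fun M : 'rV[R]_n => M 0 i) (@stat_pow _ _ _ _ hs k).
rewrite /= mxE => <-.
rewrite (bigD1 j) //=; apply: ltr_pwDl; first exact: mulr_gt0.
apply: sumr_ge0 => l _; apply: mulr_ge0 => //; exact: Ppow_ge0.
Qed.

Theorem theorem1 (R : realFieldType) (n : nat) (A : finType)
  (p : A -> 'I_n -> 'I_n -> R) (r : 'I_n -> A -> R) (beta : R)
  (hp0 : forall a i j, 0 <= p a i j)
  (hp1 : forall a i, \sum_j p a i j = 1)
  (hirr : forall d : 'I_n -> A, irreducible (Pmat p d))
  (hbeta : 0 < beta)
  (d d' : 'I_n -> A) (pi pi' : 'rV[R]_n) (g : 'I_n -> R)
  (hpi : stationary_dist (Pmat p d) pi)
  (hpi' : stationary_dist (Pmat p d') pi')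
  (hg : potential p r beta pi d g)
  (hcond : forall i : 'I_n,
     \sum_j p (d' i) i j * g j + r i (d' i) - beta * (r i (d' i) - Jmu r pi d) ^+ 2
     >= \sum_j p (d i) i j * g j + r i (d i) - beta * (r i (d i) - Jmu r pi d) ^+ 2) :
  Jmusig r beta pi' d' >= Jmusig r beta pi d /\
  ((exists i : 'I_n,
     \sum_j p (d' i) i j * g j + r i (d' i) - beta * (r i (d' i) - Jmu r pi d) ^+ 2
     > \sum_j p (d i) i j * g j + r i (d i) - beta * (r i (d i) - Jmu r pi d) ^+ 2) ->
   Jmusig r beta pi' d' > Jmusig r beta pi d).
Proof.
set mu := Jmu r pi d.
set Jm := Jmusig r beta pi d.
set a := fun i => \sum_j p (d' i) i j * g j + r i (d' i) - beta * (r i (d' i) - mu) ^+ 2.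
set b := fun i => \sum_j p (d i) i j * g j + r i (d i) - beta * (r i (d i) - mu) ^+ 2.
have hb : forall i, b i = g i + Jm.
  move=> i; rewrite /b (hg i) /fvec -/mu -/Jm.
  under [X in _ = _ - _ + X + _]eq_bigr do rewrite mxE.
  ring.
set Jpm := \sum_i pi' 0 i * (r i (d' i) - beta * (r i (d' i) - mu) ^+ 2).
have [hs' h1' h0'] := hpi'.
have hPg : \sum_i pi' 0 i * \sum_j p (d' i) i j * g j = \sum_j pi' 0 j * g j.
  under eq_bigr do rewrite mulr_sumr.
  rewrite exchange_big /=; apply: eq_bigr => j _.
  have := congr1 (fun M : 'rV[R]_n => M 0 j) hs'; rewrite /= mxE => <-.
  rewrite mulr_suml; apply: eq_bigr => i _; rewrite mxE; ring.
have key : \sum_i pi' 0 i * (a i - b i) = Jpm - Jm.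
  have e : forall i, pi' 0 i * (a i - b i) =
     pi' 0 i * \sum_j p (d' i) i j * g j +
     (pi' 0 i * (r i (d' i) - beta * (r i (d' i) - mu) ^+ 2) +
     (- (pi' 0 i * g i) + (- Jm) * pi' 0 i)).
    by move=> i; rewrite hb /a; ring.
  rewrite (eq_bigr _ (fun i _ => e i)) !big_split /= hPg -mulr_sumr h1' sumrN.
  rewrite -/Jpm; ring.
have hJ : Jpm <= Jmusig r beta pi' d'.
  have := @var_shift _ _ (fun i => pi' 0 i) (fun i => r i (d' i)) mu h1'.
  rewrite /Jmusig /Jpm /fvec /Jmu => hv.
  have e1 : forall (c : R) , \sum_i pi' 0 i * (r i (d' i) - beta * (r i (d' i) - c) ^+ 2)
     = \sum_i pi' 0 i * r i (d' i) - beta * \sum_i pi' 0 i * (r i (d' i) - c) ^+ 2.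
    move=> c; rewrite mulr_sumr -sumrB; apply: eq_bigr => i _; ring.
  rewrite !e1 hv mulrDr.
  have : 0 <= beta * (\sum_j pi' 0 j * r j (d' j) - mu) ^+ 2.
    by apply: mulr_ge0; [exact: ltW | exact: sqr_ge0].
  lra.
split.
  have : 0 <= \sum_i pi' 0 i * (a i - b i).
    apply: sumr_ge0 => i _; apply: mulr_ge0 => //; rewrite subr_ge0; exact: hcond.
  rewrite key; lra.
move=> [i0 hi0].
have : 0 < \sum_i pi' 0 i * (a i - b i).
  rewrite (bigD1 i0) //=; apply: ltr_pwDl.
    apply: mulr_gt0; last by rewrite subr_gt0.
    apply: (@pi_pos _ _ _ _ _ (hirr d') hpi') => x y; rewrite mxE; exact: hp0.
  apply: sumr_ge0 => i _; apply: mulr_ge0 => //; rewrite subr_ge0; exact: hcond.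
rewrite key; lra.
Qed.
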